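(* Let $f:\mathbb{R}^{2}\to\mathbb{R}$ be smooth and normal. Then for all $x,y\in\mathbb{R}$ and all $k_{1}\neq0$, $k_{2}\neq0$, the limits $F(k_{1},y)=\lim_{r\to\infty}\int_{-r}^{r}f(x,y)e^{-ik_{1}x}\,dx$ and $G(x,k_{2})=\lim_{r\to\infty}\int_{-r}^{r}f(x,y)e^{-ik_{2}y}\,dy$ both exist, and $y\mapsto F(k_{1},y)$ and $x\mapsto G(x,k_{2})$ are of moderate decrease (i.e. bounded by $\frac{D}{|y|^{2}}$, resp. $\frac{D}{|x|^{2}}$, for $|y|>1$, resp. $|x|>1$, for some constant $D>0$).
   Context: One-variable notions: a smooth $g:\mathbb{R}\setminus V\to\mathbb{R}$, $V\subset\mathbb{R}$ bounded closed, is analytic at infinity if there exist $\epsilon_{1},\epsilon_{2}>0$ such that $g(1/t)=\sum_{n\geq1}a_{n}t^{n}$ for $0<t<\epsilon_{1}$ and $g(1/t)=\sum_{n\geq1}b_{n}t^{n}$ for $-\epsilon_{2}<t<0$, with real coefficients and both power series absolutely convergent on the respective intervals. Two-variable notions: let $f:\mathbb{R}^{2}\setminus W\to\mathbb{R}$ be smooth with $W$ closed and bounded (here $W=\emptyset$). $f$ is of very moderate decrease if there is $C>0$ with $|f(x,y)|\leq\frac{C}{|(x,y)|}$ for $|(x,y)|>1$, and of moderate decrease if $|f(x,y)|\leq\frac{C}{|(x,y)|^{2}}$ for $|(x,y)|>1$. For fixed $x$ write $f_{x}(y)=f(x,y)$ and for fixed $y$ write $f_{y}(x)=f(x,y)$.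 $f$ is normal if: (i) for every $x$, $f_{x}$ is analytic at infinity; (ii) for every $y$, $f_{y}$ is analytic at infinity; (iii) $f$ is of very moderate decrease; (iv) $\frac{\partial f}{\partial x}$ and $\frac{\partial f}{\partial y}$ are of moderate decrease; (v) there is a uniform bound on the number of zeros of $f_{x},(f_{x})',(f_{x})''$ and of $f_{y},(f_{y})',(f_{y})''$. *)

(* Defs.v *)
From Stdlib Require Import Reals Lra List.
From Coquelicot Require Import Coquelicot.
Open Scope R_scope.

(* C^infinity on R^2: f belongs to some family of jointly continuous
   functions closed under both partial derivatives (all partials exist). *)
Definition smooth2 (f : R -> R -> R) : Prop :=
  exists S : (R -> R -> R) -> Prop, S f /\
    forall g, S g ->
      (forall x y, continuous (fun p : R * R => g (fst p) (snd p)) (x, y)) /\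
      (forall x y, ex_derive (fun t => g t y) x) /\
      (forall x y, ex_derive (fun t => g x t) y) /\
      S (fun x y => Derive (fun t => g t y) x) /\
      S (fun x y => Derive (fun t => g x t) y).

Definition series_rep_on (g : R -> R) (a : nat -> R) (P : R -> Prop) : Prop :=
  forall t, P t ->
    ex_series (fun n => Rabs (a n * t ^ n)) /\
    g (1 / t) = Series (fun n => a n * t ^ n).

Definition analytic_at_infinity (g : R -> R) : Prop :=
  exists (eps1 eps2 : R) (a b : nat -> R),
    0 < eps1 /\ 0 < eps2 /\ a 0%nat = 0 /\ b 0%nat = 0 /\
    series_rep_on g a (fun t => 0 < t < eps1) /\
    series_rep_on g b (fun t => - eps2 < t < 0).

Definition norm2 (x y : R) : R := sqrt (x ^ 2 + y ^ 2).

Definition very_moderate_decrease2 (f : R -> R -> R) : Prop :=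
  exists C, 0 < C /\ forall x y, norm2 x y > 1 -> Rabs (f x y) <= C / norm2 x y.

Definition moderate_decrease2 (f : R -> R -> R) : Prop :=
  exists C, 0 < C /\ forall x y, norm2 x y > 1 -> Rabs (f x y) <= C / (norm2 x y) ^ 2.

Definition partial_x (f : R -> R -> R) : R -> R -> R :=
  fun x y => Derive (fun t => f t y) x.
Definition partial_y (f : R -> R -> R) : R -> R -> R :=
  fun x y => Derive (fun t => f x t) y.

Definition at_most_zeros (N : nat) (g : R -> R) : Prop :=
  forall l : list R, NoDup l -> (forall z, In z l -> g z = 0) -> (length l <= N)%nat.

Definition normal (f : R -> R -> R) : Prop :=
  (forall x, analytic_at_infinity (fun y => f x y)) /\
  (forall y, analytic_at_infinity (fun x => f x y)) /\
  very_moderate_decrease2 f /\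
  moderate_decrease2 (partial_x f) /\ moderate_decrease2 (partial_y f) /\
  (exists N : nat,
     (forall x, at_most_zeros N (fun y => f x y) /\
                at_most_zeros N (Derive (fun y => f x y)) /\
                at_most_zeros N (Derive_n (fun y => f x y) 2)) /\
     (forall y, at_most_zeros N (fun x => f x y) /\
                at_most_zeros N (Derive (fun x => f x y)) /\
                at_most_zeros N (Derive_n (fun x => f x y) 2))).

Definition expmi (k t : R) : C := (cos (k * t), - sin (k * t)).

Definition fourier_trunc (g : R -> R) (k r : R) : C :=
  @RInt C_R_CompleteNormedModule (fun t => (g t : C) * expmi k t)%C (- r) r.

Definition fourier_lim (g : R -> R) (k : R) (L : C) : Prop :=
  filterlim (fourier_trunc g k) (Rbar_locally p_infty) (locally (T := C_R_NormedModule) L).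

(* Main.v *)
Require Import Defs.
From Stdlib Require Import Reals Lra Lia List Classical.
From Coquelicot Require Import Coquelicot.
Open Scope R_scope.

Lemma Cmod_le_sum (a b : R) : Cmod (a, b) <= Rabs a + Rabs b.
Proof.
  unfold Cmod; simpl.
  rewrite <- (sqrt_pow2 (Rabs a + Rabs b)) by (pose proof (Rabs_pos a); pose proof (Rabs_pos b); lra).
  apply sqrt_le_1_alt.
  pose proof (Rabs_pos a); pose proof (Rabs_pos b).
  simpl. rewrite !Rmult_1_r. pose proof (pow2_abs a); pose proof (pow2_abs b); simpl in *; rewrite !Rmult_1_r in *.
  nra.
Qed.

Lemma zeros_list (N : nat) (h : R -> R) : at_most_zeros N h ->
  exists l : list R, (length l <= N)%nat /\ forall z, h z = 0 -> In z l.
Proof.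
  intros HN.
  apply NNPP; intro Hno.
  assert (forall k, (k <= S N)%nat -> exists l, NoDup l /\ (forall z, In z l -> h z = 0) /\ length l = k).
  { induction k as [|k IH]; intros Hk.
    - exists nil; repeat split; auto; [constructor | intros z []].
    - destruct IH as [l [Hd [Hz Hl]]]; [lia|].
      assert (exists z, h z = 0 /\ ~ In z l) as [z [Hz0 Hzl]].
      { apply NNPP; intro C. apply Hno. exists l; split; [lia|].
        intros z Hz1. apply NNPP; intro Hi. apply C. exists z; auto. }
      exists (z :: l); repeat split.
      + constructor; auto.
      + intros w [<-|Hw]; auto.
      + simpl; lia. }
  destruct (H (S N) (le_n _)) as [l [Hd [Hz Hl]]].
  specialize (HN l Hd Hz). lia.
Qed.

Lemma cont_cos k t : continuous (fun t => cos (k*t)) t.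
Proof. apply (ex_derive_continuous (fun t => cos (k*t))). auto_derive. auto. Qed.
Lemma cont_sin k t : continuous (fun t => sin (k*t)) t.
Proof. apply (ex_derive_continuous (fun t => sin (k*t))). auto_derive. auto. Qed.

Lemma trunc_pair (g : R -> R) (k r : R) (Hc : forall x, continuous g x) :
  fourier_trunc g k r =
  (RInt (fun t => g t * cos (k * t)) (- r) r,
   RInt (fun t => - (g t * sin (k * t))) (- r) r).
Proof.
  unfold fourier_trunc.
  assert (Hcc : forall t, continuous (fun t => g t * cos (k * t)) t).
  { intro t. apply (continuous_mult g (fun t => cos (k * t))); auto.
    apply cont_cos. }
  assert (Hcs : forall t, continuous (fun t => - (g t * sin (k * t))) t).
  { intro t. apply (continuous_opp (fun t => g t * sin (k * t))).
    apply (continuous_mult g (fun t => sin (k * t))); auto.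
    apply cont_sin. }
  apply (is_RInt_unique (V := C_R_CompleteNormedModule)).
  apply (is_RInt_ext (V := C_R_CompleteNormedModule) (fun t => (g t * cos (k * t), - (g t * sin (k * t))))).
  { intros x _. unfold expmi, Cmult; simpl. apply injective_projections; simpl; ring. }
  apply (is_RInt_fct_extend_pair (U := R_NormedModule) (V := R_NormedModule)); simpl.
  - apply (RInt_correct (V := R_CompleteNormedModule)); apply ex_RInt_continuous; intros; auto.
  - apply (RInt_correct (V := R_CompleteNormedModule)); apply ex_RInt_continuous; intros; auto.
Qed.

Lemma cauchy_C (I : R -> C) :
  (forall eps : posreal, exists R0, forall u v, R0 < u -> R0 < v ->
      Rabs (fst (I u) - fst (I v)) < eps /\ Rabs (snd (I u) - snd (I v)) < eps) ->
  exists L, filterlim I (Rbar_locally p_infty) (locally (T := C_R_NormedModule) L).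
Proof.
  intros H.
  destruct (proj1 (@filterlim_locally_cauchy R C_R_CompleteNormedModule (Rbar_locally p_infty) _ I)) as [L HL].
  - intros eps. destruct (H eps) as [R0 HR0].
    exists (fun u => R0 < u). split; [exists R0; auto|].
    intros u v Hu Hv. destruct (HR0 v u Hv Hu) as [H1 H2].
    split; assumption.
  - exists L. exact HL.
Qed.

Lemma lim_bound_C (I : R -> C) (L : C) (R0 A B : R) :
  filterlim I (Rbar_locally p_infty) (locally (T := C_R_NormedModule) L) ->
  0 <= A ->
  (forall r, R0 < r -> Rabs (fst (I r)) <= A / r + B /\ Rabs (snd (I r)) <= A / r + B) ->
  Cmod L <= 2 * B.
Proof.
  intros HL HA Hb.
  destruct L as [L1 L2].
  assert (K : forall e : posreal, Rabs L1 <= B + e /\ Rabs L2 <= B + e).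
  { intro e.
    assert (He2 : 0 < e / 2) by (destruct e; simpl; lra).
    destruct (HL _ (locally_ball (L1, L2) (mkposreal _ He2))) as [M HM].
    set (r := Rmax (Rmax R0 M) (2 * A / e) + 1).
    assert (Hr1 : R0 < r) by (unfold r; pose proof (Rmax_l (Rmax R0 M) (2*A/e)); pose proof (Rmax_l R0 M); lra).
    assert (Hr2 : M < r) by (unfold r; pose proof (Rmax_l (Rmax R0 M) (2*A/e)); pose proof (Rmax_r R0 M); lra).
    assert (Hr3 : 2 * A / e < r) by (unfold r; pose proof (Rmax_r (Rmax R0 M) (2*A/e)); lra).
    assert (Hrpos : 0 < r).
    { destruct e as [e ep]; simpl in *. assert (0 <= 2 * A / e) by (apply Rmult_le_pos; [lra| left; apply Rinv_0_lt_compat; lra]). lra. }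
    assert (HAr : A / r <= e / 2).
    { destruct e as [e ep]; simpl in *.
      apply Rmult_lt_compat_r with (r := e) in Hr3; [|lra].
      unfold Rdiv in *. rewrite Rmult_assoc, Rinv_l in Hr3 by lra.
      apply Rmult_le_reg_r with r; [lra|]. rewrite Rmult_assoc, Rinv_l by lra. nra. }
    destruct (HM r Hr2) as [B1 B2]. destruct (Hb r Hr1) as [C1 C2].
    change (Rabs (fst (I r) - L1) < e / 2) in B1.
    change (Rabs (snd (I r) - L2) < e / 2) in B2.
    split.
    - pose proof (Rabs_triang_inv (fst (I r)) L1). rewrite Rabs_minus_sym in B1.
      pose proof (Rabs_triang_inv L1 (fst (I r))). lra.
    - rewrite Rabs_minus_sym in B2.
      pose proof (Rabs_triang_inv L2 (snd (I r))). lra. }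
  assert (K1 : Rabs L1 <= B).
  { apply Rnot_lt_le; intro C.
    assert (Hp : 0 < (Rabs L1 - B) / 2) by lra.
    destruct (K (mkposreal _ Hp)) as [K1 _]; simpl in K1. lra. }
  assert (K2 : Rabs L2 <= B).
  { apply Rnot_lt_le; intro C.
    assert (Hp : 0 < (Rabs L2 - B) / 2) by lra.
    destruct (K (mkposreal _ Hp)) as [_ K2]; simpl in K2. lra. }
  pose proof (Cmod_le_sum L1 L2). lra.
Qed.


Lemma is_derive_eq (f : R -> R) x v w : is_derive f x v -> v = w -> is_derive f x w.
Proof. intros H ->; exact H. Qed.

Lemma abs_prod_le (u v w : R) : Rabs v <= 1 -> w <> 0 -> Rabs (u * v / w) <= Rabs u / Rabs w.
Proof.
  intros Hv Hw. unfold Rdiv. rewrite !Rabs_mult, Rabs_inv.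
  assert (0 < / Rabs w) by (apply Rinv_0_lt_compat; apply Rabs_pos_lt; auto).
  pose proof (Rabs_pos u). pose proof (Rabs_pos v).
  apply Rmult_le_compat_r; [lra|]. nra.
Qed.

Lemma est (g g1 g2 c s : R -> R) (k a b : R) : k <> 0 -> a <= b ->
  (forall x, is_derive g x (g1 x)) -> (forall x, is_derive g1 x (g2 x)) ->
  (forall x, continuous g2 x) ->
  (forall x, is_derive s x (k * c x)) -> (forall x, is_derive c x (- k * s x)) ->
  (forall x, Rabs (c x) <= 1) -> (forall x, Rabs (s x) <= 1) ->
  Rabs (RInt (fun x => g x * c x) a b) <=
    (Rabs (g a) + Rabs (g b)) / Rabs k + (Rabs (g1 a) + Rabs (g1 b)) / Rabs (k * k)
    + RInt (fun x => Rabs (g2 x)) a b / Rabs (k * k).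
Proof.
  intros Hk Hab Hg Hg1 Hg2 Hs Hc Hc1 Hs1.
  assert (Hkk : k * k <> 0) by (apply Rmult_integral_contrapositive; auto).
  set (F := fun x => g x * s x / k + g1 x * c x / (k * k)).
  assert (DF : forall x, is_derive F x (g x * c x + g2 x * c x / (k * k))).
  { intro x.
    assert (D1 := is_derive_mult g s x (g1 x) (k * c x) (Hg x) (Hs x) Rmult_comm).
    assert (D2 := is_derive_mult g1 c x (g2 x) (- k * s x) (Hg1 x) (Hc x) Rmult_comm).
    assert (D3 := is_derive_scal _ x (/ k) _ D1).
    assert (D4 := is_derive_scal _ x (/ (k * k)) _ D2).
    assert (D5 := is_derive_plus _ _ x _ _ D3 D4).
    eapply is_derive_eq.
    - eapply (is_derive_ext _ F); [|exact D5].
      intro t. unfold F; simpl. unfold plus, scal, mult; simpl. unfold mult; simpl. field; auto.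
    - unfold plus, scal, mult; simpl. unfold mult; simpl. field; auto. }
  assert (Hcc : forall x, continuous c x).
  { intro x. apply (ex_derive_continuous c). eexists; apply Hc. }
  assert (Hcg : forall x, continuous g x).
  { intro x. apply (ex_derive_continuous g). eexists; apply Hg. }
  assert (C1 : forall x, continuous (fun x => g x * c x) x).
  { intro x. apply (continuous_mult g c); auto. }
  assert (C2 : forall x, continuous (fun x => g2 x * c x / (k * k)) x).
  { intro x. apply (continuous_mult (fun x => g2 x * c x) (fun _ => / (k * k))).
    - apply (continuous_mult g2 c); auto.
    - apply continuous_const. }
  assert (I1 : is_RInt (fun x => g x * c x + g2 x * c x / (k * k)) a b (F b - F a)).
  { apply (is_RInt_derive (V := R_CompleteNormedModule) F); intros x _; auto.
    apply (continuous_plus (fun x => g x * c x) (fun x => g2 x * c x / (k * k))); auto. }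
  assert (E1 : ex_RInt (fun x => g x * c x) a b) by (apply (ex_RInt_continuous (V := R_CompleteNormedModule)); auto).
  assert (E2 : ex_RInt (fun x => g2 x * c x / (k * k)) a b) by (apply (ex_RInt_continuous (V := R_CompleteNormedModule)); auto).
  assert (E3 : ex_RInt (fun x => Rabs (g2 x) / Rabs (k * k)) a b).
  { apply (ex_RInt_continuous (V := R_CompleteNormedModule)); intros; apply (continuous_mult (fun x => Rabs (g2 x)) (fun _ => / Rabs (k * k))).
    - apply (continuous_comp g2 Rabs); auto. apply continuous_Rabs.
    - apply continuous_const. }
  assert (Eq : RInt (fun x => g x * c x) a b = (F b - F a) - RInt (fun x => g2 x * c x / (k * k)) a b).
  { rewrite <- (is_RInt_unique _ _ _ _ I1).
    rewrite (RInt_plus (V := R_CompleteNormedModule) (fun x => g x * c x) (fun x => g2 x * c x / (k * k))); auto.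
    unfold plus; simpl.
    generalize (RInt (fun x : R => g x * c x) a b) (RInt (fun x : R => g2 x * c x / (k * k)) a b).
    intros u v. simpl in u, v. ring. }
  assert (B1 : Rabs (RInt (fun x => g2 x * c x / (k * k)) a b) <= RInt (fun x => Rabs (g2 x)) a b / Rabs (k * k)).
  { eapply Rle_trans; [apply abs_RInt_le; auto|].
    eapply Rle_trans.
    - apply (RInt_le _ (fun x => Rabs (g2 x) / Rabs (k * k))); auto.
      + apply (ex_RInt_continuous (V := R_CompleteNormedModule)); intros; apply (continuous_comp _ Rabs); auto. apply continuous_Rabs.
      + intros x _. apply abs_prod_le; auto.
    - rewrite (RInt_ext (V := R_CompleteNormedModule) _ (fun x => scal (/ Rabs (k*k)) (Rabs (g2 x)))).
      2: { intros; unfold scal; simpl; unfold mult; simpl; unfold Rdiv; ring. }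
      rewrite (RInt_scal (V := R_CompleteNormedModule)).
      + unfold scal; simpl; unfold mult; simpl. unfold Rdiv. rewrite Rmult_comm. lra.
      + apply (ex_RInt_continuous (V := R_CompleteNormedModule)); intros; apply (continuous_comp g2 Rabs); auto. apply continuous_Rabs. }
  rewrite Eq.
  assert (BF : Rabs (F b - F a) <= (Rabs (g a) + Rabs (g b)) / Rabs k + (Rabs (g1 a) + Rabs (g1 b)) / Rabs (k * k)).
  { unfold F.
    pose proof (abs_prod_le (g a) (s a) k (Hs1 a) Hk).
    pose proof (abs_prod_le (g b) (s b) k (Hs1 b) Hk).
    pose proof (abs_prod_le (g1 a) (c a) (k * k) (Hc1 a) Hkk).
    pose proof (abs_prod_le (g1 b) (c b) (k * k) (Hc1 b) Hkk).
    pose proof (Rabs_triang (g b * s b / k) (g1 b * c b / (k * k))).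
    pose proof (Rabs_triang (g a * s a / k) (g1 a * c a / (k * k))).
    pose proof (Rabs_triang (g b * s b / k + g1 b * c b / (k * k)) (- (g a * s a / k + g1 a * c a / (k * k)))).
    rewrite Rabs_Ropp in H5. unfold Rminus.
    unfold Rdiv in *. lra. }
  pose proof (Rabs_triang (F b - F a) (- RInt (fun x => g2 x * c x / (k * k)) a b)).
  rewrite Rabs_Ropp in H. unfold Rminus at 1. lra.
Qed.


Lemma no_zero_int (g1 : R -> R) a b : a <= b ->
  (forall x, ex_derive g1 x) -> (forall x, continuous (Derive g1) x) ->
  (forall z, a < z < b -> Derive g1 z <> 0) ->
  RInt (fun t => Rabs (Derive g1 t)) a b = Rabs (g1 b - g1 a).
Proof.
  intros Hab Hd Hc Hz.
  assert (Hcont : continuity (Derive g1)).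
  { intro x. apply continuity_pt_filterlim. apply Hc. }
  assert (Hsign : (forall z, a < z < b -> 0 < Derive g1 z) \/ (forall z, a < z < b -> Derive g1 z < 0)).
  { destruct (classic (exists p, a < p < b /\ Derive g1 p < 0)) as [[p [Hp Hp0]]|Hn].
    - right. intros q Hq. destruct (Rlt_dec (Derive g1 q) 0) as [|Hq0]; auto.
      exfalso. assert (Hq1 : 0 < Derive g1 q) by (pose proof (Hz q Hq); lra).
      destruct (IVT_gen (Derive g1) p q 0 Hcont) as [z [Hz1 Hz2]].
      + split; [apply Rle_trans with (Derive g1 p); [apply Rmin_l|lra] |
                apply Rle_trans with (Derive g1 q); [lra|apply Rmax_r]].
      + apply (Hz z); [|exact Hz2].
        assert (a < Rmin p q) by (apply Rmin_glb_lt; lra).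
        assert (Rmax p q < b) by (apply Rmax_lub_lt; lra).
        lra.
    - left. intros q Hq. destruct (Rlt_dec 0 (Derive g1 q)) as [|Hq0]; auto.
      exfalso. apply Hn. exists q. split; auto. pose proof (Hz q Hq). lra. }
  assert (HR : RInt (Derive g1) a b = g1 b - g1 a).
  { apply RInt_Derive; intros; auto. }
  destruct Hsign as [Hp|Hn].
  - rewrite (RInt_ext _ (Derive g1)).
    + rewrite HR. apply eq_sym, Rabs_right.
      assert (0 <= RInt (Derive g1) a b).
      { apply RInt_ge_0; auto.
        - apply (ex_RInt_continuous (V := R_CompleteNormedModule)); intros; auto.
        - intros; left; auto. }
      lra.
    + intros x Hx. rewrite Rmin_left, Rmax_right in Hx by lra. apply Rabs_right. left; apply Hp; lra.
  - rewrite (RInt_ext _ (fun t => opp (Derive g1 t))).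
    + rewrite (RInt_opp (V := R_CompleteNormedModule) (Derive g1)).
      * change (opp (RInt (Derive g1) a b)) with (- RInt (Derive g1) a b). rewrite HR.
        rewrite (Rabs_left1 (g1 b - g1 a)); [reflexivity|].
        assert (RInt (Derive g1) a b <= 0).
        { assert (0 <= RInt (fun t => - Derive g1 t) a b).
          { apply RInt_ge_0; auto.
            - apply (ex_RInt_continuous (V := R_CompleteNormedModule)); intros.
              apply (continuous_opp (Derive g1)); auto.
            - intros x Hx; pose proof (Hn x Hx); lra. }
          rewrite (RInt_opp (V := R_CompleteNormedModule) (Derive g1)) in H.
          - change (0 <= - RInt (Derive g1) a b) in H. lra.
          - apply (ex_RInt_continuous (V := R_CompleteNormedModule)); intros; auto. }
        lra.
      * apply (ex_RInt_continuous (V := R_CompleteNormedModule)); intros; auto.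
    + intros x Hx. rewrite Rmin_left, Rmax_right in Hx by lra. apply Rabs_left. auto.
Qed.

Definition fl (z : R) (l : list R) := filter (fun t => if Rlt_dec t z then true else false) l.
Definition fr (z : R) (l : list R) := filter (fun t => if Rlt_dec z t then true else false) l.

Lemma filt_le (z : R) l : (length (fl z l) + length (fr z l) <= length l)%nat.
Proof.
  induction l as [|w l IH]; simpl; auto.
  unfold fl, fr in *; simpl.
  destruct (Rlt_dec w z); destruct (Rlt_dec z w); simpl; try lra; lia.
Qed.

Lemma filt_lt (z : R) l : In z l -> (length (fl z l) + length (fr z l) < length l)%nat.
Proof.
  induction l as [|w l IH]; simpl; [tauto|].
  intros [Hwz|Hin]; [subst w|]; unfold fl, fr in *; simpl.
  - destruct (Rlt_dec z z); [lra|]. pose proof (filt_le z l). unfold fl, fr in *. simpl. lia.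
  - specialize (IH Hin). destruct (Rlt_dec w z); destruct (Rlt_dec z w); simpl; try lra; lia.
Qed.

Lemma tv (g1 : R -> R) (M : R) :
  (forall x, ex_derive g1 x) -> (forall x, continuous (Derive g1) x) ->
  forall n l a b, (length l <= n)%nat -> a <= b ->
  (forall z, a < z < b -> Derive g1 z = 0 -> In z l) ->
  (forall x, a <= x <= b -> Rabs (g1 x) <= M) ->
  RInt (fun t => Rabs (Derive g1 t)) a b <= 2 * (INR (length l) + 1) * M.
Proof.
  intros Hd Hc n. induction n as [|n IH]; intros l a b Hl Hab Hz HM;
  (assert (HM0 : 0 <= M) by (pose proof (HM a ltac:(lra)); pose proof (Rabs_pos (g1 a)); lra));
  (assert (HL : 0 <= INR (length l)) by apply pos_INR);
  (destruct (classic (exists z, In z l /\ a < z < b)) as [[z [Hzl Hzab]]|Hno]).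
  - destruct l; simpl in Hl; [destruct Hzl|lia].
  - rewrite no_zero_int; auto.
    + pose proof (Rabs_triang (g1 b) (- g1 a)). rewrite Rabs_Ropp in H.
      pose proof (HM a ltac:(lra)). pose proof (HM b ltac:(lra)). unfold Rminus. nra.
    + intros z Hz0 Hz1. apply Hno. exists z; auto.
  - pose proof (filt_lt z l Hzl).
    assert (E : forall u v, ex_RInt (fun t => Rabs (Derive g1 t)) u v).
    { intros u v. apply (ex_RInt_continuous (V := R_CompleteNormedModule)); intros.
      apply (continuous_comp (Derive g1) Rabs); auto. apply continuous_Rabs. }
    rewrite <- (RInt_Chasles (V := R_CompleteNormedModule) _ a z b); auto.
    assert (I1 : RInt (fun t => Rabs (Derive g1 t)) a z <= 2 * (INR (length (fl z l)) + 1) * M).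
    { apply IH; try lra; try lia.
      - intros w Hw Hw0. unfold fl. apply filter_In. split; [apply Hz; auto; lra|].
        destruct (Rlt_dec w z); auto; lra.
      - intros; apply HM; lra. }
    assert (I2 : RInt (fun t => Rabs (Derive g1 t)) z b <= 2 * (INR (length (fr z l)) + 1) * M).
    { apply IH; try lra; try lia.
      - intros w Hw Hw0. unfold fr. apply filter_In. split; [apply Hz; auto; lra|].
        destruct (Rlt_dec z w); auto; lra.
      - intros; apply HM; lra. }
    assert (Hle : INR (length (fl z l)) + INR (length (fr z l)) + 1 <= INR (length l)).
    { rewrite <- plus_INR, <- S_INR. apply le_INR. lia. }
    change (RInt (fun t => Rabs (Derive g1 t)) a z + RInt (fun t => Rabs (Derive g1 t)) z b <= 2 * (INR (length l) + 1) * M).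
    nra.
  - rewrite no_zero_int; auto.
    + pose proof (Rabs_triang (g1 b) (- g1 a)). rewrite Rabs_Ropp in H.
      pose proof (HM a ltac:(lra)). pose proof (HM b ltac:(lra)). unfold Rminus. nra.
    + intros z Hz0 Hz1. apply Hno. exists z; auto.
Qed.


Lemma norm2_sq x y : norm2 x y ^ 2 = x ^ 2 + y ^ 2.
Proof. unfold norm2. apply pow2_sqrt. nra. Qed.

Lemma norm2_ge_x x y : Rabs x <= norm2 x y.
Proof. unfold norm2. rewrite <- sqrt_Rsqr_abs. apply sqrt_le_1_alt. unfold Rsqr. nra. Qed.

Lemma norm2_ge_y x y : Rabs y <= norm2 x y.
Proof. unfold norm2. rewrite <- sqrt_Rsqr_abs. apply sqrt_le_1_alt. unfold Rsqr. nra. Qed.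

Lemma norm2_sym x y : norm2 x y = norm2 y x.
Proof. unfold norm2. f_equal. ring. Qed.

Lemma div_mono (C a b : R) : 0 <= C -> 0 < a -> a <= b -> C / b <= C / a.
Proof.
  intros HC Ha Hab. unfold Rdiv. apply Rmult_le_compat_l; auto.
  apply Rinv_le_contravar; auto.
Qed.

Lemma vmd_far (h : R -> R -> R) C x y u : 0 < C ->
  (forall x y, norm2 x y > 1 -> Rabs (h x y) <= C / norm2 x y) ->
  1 < u -> u <= Rabs x -> Rabs (h x y) <= C / u.
Proof.
  intros HC H Hu Hx. pose proof (norm2_ge_x x y).
  eapply Rle_trans; [apply H; lra|]. apply div_mono; lra.
Qed.

Lemma md_far (h : R -> R -> R) C x y u : 0 < C ->
  (forall x y, norm2 x y > 1 -> Rabs (h x y) <= C / norm2 x y ^ 2) ->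
  1 < u -> u <= Rabs x -> Rabs (h x y) <= C / u.
Proof.
  intros HC H Hu Hx. pose proof (norm2_ge_x x y).
  eapply Rle_trans; [apply H; lra|]. apply div_mono; try lra.
  rewrite norm2_sq. pose proof (pow2_abs x). pose proof (pow2_ge_0 y).
  assert (u <= Rabs x ^ 2) by (simpl; nra). lra.
Qed.

Lemma md_y (h : R -> R -> R) C x y : 0 < C ->
  (forall x y, norm2 x y > 1 -> Rabs (h x y) <= C / norm2 x y ^ 2) ->
  1 < Rabs y -> Rabs (h x y) <= C / y ^ 2.
Proof.
  intros HC H Hy. pose proof (norm2_ge_y x y).
  eapply Rle_trans; [apply H; lra|]. apply div_mono; try lra.
  - pose proof (pow2_abs y). simpl in *. nra.
  - rewrite norm2_sq. pose proof (pow2_ge_0 x). lra.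
Qed.


Lemma bothb (g : R -> R) k N (l0 : list R) a b M : k <> 0 -> a <= b ->
  (forall x, ex_derive g x) -> (forall x, ex_derive (Derive g) x) ->
  (forall x, continuous (Derive (Derive g)) x) ->
  (length l0 <= N)%nat -> (forall z, Derive (Derive g) z = 0 -> In z l0) ->
  (forall x, a <= x <= b -> Rabs (Derive g x) <= M) ->
  Rabs (RInt (fun t => g t * cos (k * t)) a b) <=
    (Rabs (g a) + Rabs (g b)) / Rabs k + (Rabs (Derive g a) + Rabs (Derive g b)) / Rabs (k * k)
    + 2 * (INR N + 1) * M / Rabs (k * k) /\
  Rabs (RInt (fun t => g t * sin (k * t)) a b) <=
    (Rabs (g a) + Rabs (g b)) / Rabs k + (Rabs (Derive g a) + Rabs (Derive g b)) / Rabs (k * k)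
    + 2 * (INR N + 1) * M / Rabs (k * k).
Proof.
  intros Hk Hab Hd0 Hd1 Hc2 Hl Hz HM.
  assert (HM0 : 0 <= M) by (pose proof (HM a ltac:(lra)); pose proof (Rabs_pos (Derive g a)); lra).
  assert (Hkk : 0 < Rabs (k * k)) by (apply Rabs_pos_lt; apply Rmult_integral_contrapositive; auto).
  assert (TV : RInt (fun t => Rabs (Derive (Derive g) t)) a b / Rabs (k * k) <= 2 * (INR N + 1) * M / Rabs (k * k)).
  { apply Rmult_le_compat_r; [left; apply Rinv_0_lt_compat; auto|].
    eapply Rle_trans.
    - apply (tv (Derive g) M Hd1 Hc2 (length l0) l0 a b); auto.
    - apply le_INR in Hl. nra. }
  assert (G0 : forall x, is_derive g x (Derive g x)) by (intro x; apply Derive_correct; auto).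
  assert (G1 : forall x, is_derive (Derive g) x (Derive (Derive g) x)) by (intro x; apply Derive_correct; auto).
  assert (DC : forall x, is_derive (fun t => cos (k * t)) x (- k * sin (k * x))).
  { intro x. auto_derive; try ring; auto. }
  assert (DS : forall x, is_derive (fun t => sin (k * t)) x (k * cos (k * x))).
  { intro x. auto_derive; try ring; auto. }
  assert (DmC : forall x, is_derive (fun t => - cos (k * t)) x (k * sin (k * x))).
  { intro x. auto_derive; try ring; auto. }
  assert (DS' : forall x, is_derive (fun t => sin (k * t)) x (- k * - cos (k * x))).
  { intro x. auto_derive; try ring; auto. }
  split.
  - eapply Rle_trans; [apply (est g (Derive g) (Derive (Derive g)) (fun t => cos (k * t)) (fun t => sin (k * t)) k a b Hk Hab G0 G1 Hc2 DS DC)|].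
    + intro x; apply Rabs_le; apply COS_bound.
    + intro x; apply Rabs_le; apply SIN_bound.
    + lra.
  - eapply Rle_trans; [apply (est g (Derive g) (Derive (Derive g)) (fun t => sin (k * t)) (fun t => - cos (k * t)) k a b Hk Hab G0 G1 Hc2 DmC DS')|].
    + intro x; apply Rabs_le; apply SIN_bound.
    + intro x; rewrite Rabs_Ropp; apply Rabs_le; apply COS_bound.
    + lra.
Qed.

Lemma RInt_opp_R (f : R -> R) a b : (forall x, continuous f x) ->
  RInt (fun t => - f t) a b = - RInt f a b.
Proof.
  intros Hc. apply (RInt_opp (V := R_CompleteNormedModule) f).
  apply (ex_RInt_continuous (V := R_CompleteNormedModule)); intros; auto.
Qed.

Lemma diff_split (f : R -> R) u v : (forall x, continuous f x) ->
  RInt f (- v) v - RInt f (- u) u = RInt f (- v) (- u) + RInt f u v.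
Proof.
  intros Hc.
  assert (E : forall a b, ex_RInt f a b) by (intros; apply (ex_RInt_continuous (V := R_CompleteNormedModule)); intros; auto).
  rewrite <- (RInt_Chasles (V := R_CompleteNormedModule) f (- v) (- u) v); auto.
  rewrite <- (RInt_Chasles (V := R_CompleteNormedModule) f (- u) u v); auto.
  change (RInt f (- v) (- u) + (RInt f (- u) u + RInt f u v) - RInt f (- u) u = RInt f (- v) (- u) + RInt f u v).
  ring.
Qed.


Lemma core (h : R -> R -> R)
  (D0 : forall y x, ex_derive (fun t => h t y) x)
  (D1 : forall y x, ex_derive (Derive (fun t => h t y)) x)
  (C2 : forall y x, continuous (Derive (Derive (fun t => h t y))) x)
  (VMD : exists C, 0 < C /\ forall x y, norm2 x y > 1 -> Rabs (h x y) <= C / norm2 x y)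
  (MD : exists C, 0 < C /\ forall x y, norm2 x y > 1 ->
          Rabs (Derive (fun t => h t y) x) <= C / (norm2 x y) ^ 2)
  (Z : exists N : nat, forall y, at_most_zeros N (Derive_n (fun x => h x y) 2)) :
  forall k, k <> 0 ->
     (forall y, exists L, fourier_lim (fun x => h x y) k L) /\
     (exists D, 0 < D /\ forall y L, Rabs y > 1 ->
        fourier_lim (fun x => h x y) k L -> Cmod L <= D / y ^ 2).
Proof.
  intros k Hk.
  destruct VMD as [C [HC HVC]]. destruct MD as [C' [HC' HMC]]. destruct Z as [N HN].
  assert (Hk1 : 0 < Rabs k) by (apply Rabs_pos_lt; auto).
  assert (Hkk : 0 < Rabs (k * k)) by (apply Rabs_pos_lt; apply Rmult_integral_contrapositive; auto).
  assert (HNp : 0 <= INR N) by apply pos_INR.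
  assert (Cg : forall y x, continuous (fun t => h t y) x).
  { intros y x. apply (ex_derive_continuous (fun t => h t y)). auto. }
  assert (Lz : forall y, exists l0 : list R, (length l0 <= N)%nat /\
              forall z, Derive (Derive (fun t => h t y)) z = 0 -> In z l0).
  { intro y. destruct (zeros_list N _ (HN y)) as [l0 [Hl Hz]]. exists l0; split; auto. }
  split.
  -
    intro y. destruct (Lz y) as [l0 [Hl Hz]].
    set (g := fun t => h t y).
    set (K := 2 * C / Rabs k + (2 * INR N + 4) * C' / Rabs (k * k)).
    assert (HK : 0 <= K).
    { unfold K. assert (0 <= 2 * C / Rabs k) by (unfold Rdiv; apply Rmult_le_pos; [lra| left; apply Rinv_0_lt_compat; lra]).
      assert (0 <= (2 * INR N + 4) * C' / Rabs (k * k)) by (unfold Rdiv; apply Rmult_le_pos; [nra| left; apply Rinv_0_lt_compat; lra]).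
      lra. }
    assert (IB : forall a b u, 1 < u -> a <= b -> (forall x, a <= x <= b -> u <= Rabs x) ->
       Rabs (RInt (fun t => g t * cos (k * t)) a b) <= K / u /\
       Rabs (RInt (fun t => g t * sin (k * t)) a b) <= K / u).
    { intros a b u Hu Hab Hx.
      destruct (bothb g k N l0 a b (C' / u) Hk Hab (D0 y) (D1 y) (C2 y) Hl Hz) as [B1 B2].
      { intros x Hxab. apply (md_far (fun x y => Derive (fun t => h t y) x) C' x y u); auto. }
      assert (Ga : Rabs (g a) <= C / u) by (apply (vmd_far h C a y u); auto; apply Hx; lra).
      assert (Gb : Rabs (g b) <= C / u) by (apply (vmd_far h C b y u); auto; apply Hx; lra).
      assert (G1a : Rabs (Derive g a) <= C' / u).
      { apply (md_far (fun x y => Derive (fun t => h t y) x) C' a y u); auto; apply Hx; lra. }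
      assert (G1b : Rabs (Derive g b) <= C' / u).
      { apply (md_far (fun x y => Derive (fun t => h t y) x) C' b y u); auto; apply Hx; lra. }
      assert (X : (Rabs (g a) + Rabs (g b)) / Rabs k + (Rabs (Derive g a) + Rabs (Derive g b)) / Rabs (k * k)
                  + 2 * (INR N + 1) * (C' / u) / Rabs (k * k) <= K / u).
      { unfold K. unfold Rdiv in *.
        assert (0 < / Rabs k) by (apply Rinv_0_lt_compat; lra).
        assert (0 < / Rabs (k * k)) by (apply Rinv_0_lt_compat; lra).
        assert (0 < / u) by (apply Rinv_0_lt_compat; lra).
        nra. }
      split; lra. }
    apply cauchy_C.
    intros [eps Heps]. simpl.
    exists (Rmax 2 (2 * K / eps)).
    assert (MAIN : forall u v, Rmax 2 (2 * K / eps) < u -> u <= v ->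
        Rabs (fst (fourier_trunc g k u) - fst (fourier_trunc g k v)) < eps /\
        Rabs (snd (fourier_trunc g k u) - snd (fourier_trunc g k v)) < eps).
    { intros u v Hu Huv.
      assert (Hu2 : 2 < u) by (pose proof (Rmax_l 2 (2 * K / eps)); lra).
      assert (Hu3 : 2 * K / eps < u) by (pose proof (Rmax_r 2 (2 * K / eps)); lra).
      assert (Hsmall : 2 * (K / u) < eps).
      { apply Rmult_lt_compat_r with (r := eps) in Hu3; auto.
        unfold Rdiv in *. rewrite Rmult_assoc, Rinv_l in Hu3 by lra.
        apply Rmult_lt_reg_r with u; [lra|].
        replace (2 * (K * / u) * u) with (2 * K) by (field; lra). lra. }
      rewrite !trunc_pair by (apply Cg). simpl.
      destruct (IB (- v) (- u) u ltac:(lra) ltac:(lra)) as [A1 A2].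
      { intros x Hx. rewrite Rabs_left by lra. lra. }
      destruct (IB u v u ltac:(lra) ltac:(lra)) as [B1 B2].
      { intros x Hx. rewrite Rabs_right by lra. lra. }
      assert (Cc1 : forall x, continuous (fun t => g t * cos (k * t)) x).
      { intro x. apply (continuous_mult g (fun t => cos (k * t))); [apply Cg|apply cont_cos]. }
      assert (Cs1 : forall x, continuous (fun t => g t * sin (k * t)) x).
      { intro x. apply (continuous_mult g (fun t => sin (k * t))); [apply Cg|apply cont_sin]. }
      rewrite (RInt_opp_R (fun t => g t * sin (k * t))) by auto.
      rewrite (RInt_opp_R (fun t => g t * sin (k * t))) by auto.
      rewrite Rabs_minus_sym.
      rewrite (diff_split (fun t : R => g t * cos (k * t)) u v Cc1).
      split.
      - pose proof (Rabs_triang (RInt (fun t => g t * cos (k * t)) (- v) (- u)) (RInt (fun t => g t * cos (k * t)) u v)). lra.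
      - replace (- RInt (fun t : R => g t * sin (k * t)) (- u) u - - RInt (fun t : R => g t * sin (k * t)) (- v) v)
          with (RInt (fun t : R => g t * sin (k * t)) (- v) v - RInt (fun t : R => g t * sin (k * t)) (- u) u) by ring.
        rewrite (diff_split (fun t : R => g t * sin (k * t)) u v Cs1).
        pose proof (Rabs_triang (RInt (fun t => g t * sin (k * t)) (- v) (- u)) (RInt (fun t => g t * sin (k * t)) u v)). lra. }
    intros u v Hu Hv.
    destruct (Rle_dec u v) as [Huv|Huv].
    + apply MAIN; auto.
    + destruct (MAIN v u Hv ltac:(lra)) as [M1 M2].
      rewrite Rabs_minus_sym in M1, M2. auto.
  - exists (2 * ((2 * INR N + 4) * C' / Rabs (k * k))).
    split.
    { unfold Rdiv. assert (0 < / Rabs (k * k)) by (apply Rinv_0_lt_compat; lra).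
      assert (0 < (2 * INR N + 4) * C') by nra.
      apply Rmult_lt_0_compat; [lra|]. apply Rmult_lt_0_compat; lra. }
    intros y L Hy HL.
    destruct (Lz y) as [l0 [Hl Hz]].
    set (g := fun t => h t y) in *.
    assert (Hy2 : 0 < y ^ 2) by (pose proof (pow2_abs y); simpl in *; nra).
    set (B0 := (2 * INR N + 4) * C' / Rabs (k * k) / y ^ 2).
    assert (Hfin : Cmod L <= 2 * B0).
    { apply (lim_bound_C (fourier_trunc g k) L 1 (2 * C / Rabs k) B0 HL).
      { unfold Rdiv. assert (0 < / Rabs k) by (apply Rinv_0_lt_compat; lra). nra. }
      intros r Hr.
      assert (Cs1 : forall x, continuous (fun t => g t * sin (k * t)) x).
      { intro x. apply (continuous_mult g (fun t => sin (k * t))); [apply Cg|apply cont_sin]. }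
      rewrite trunc_pair by (apply Cg). simpl.
      rewrite (RInt_opp_R (fun t : R => g t * sin (k * t))) by auto. rewrite Rabs_Ropp.
      destruct (bothb g k N l0 (- r) r (C' / y ^ 2) Hk ltac:(lra) (D0 y) (D1 y) (C2 y) Hl Hz) as [B1 B2].
      { intros x _. apply (md_y (fun x y => Derive (fun t => h t y) x) C' x y); auto. }
      assert (Ga : Rabs (g (- r)) <= C / r).
      { apply (vmd_far h C (- r) y r); auto. rewrite Rabs_Ropp, Rabs_right; lra. }
      assert (Gb : Rabs (g r) <= C / r).
      { apply (vmd_far h C r y r); auto. rewrite Rabs_right; lra. }
      assert (G1a : Rabs (Derive g (- r)) <= C' / y ^ 2).
      { apply (md_y (fun x y => Derive (fun t => h t y) x) C' (- r) y); auto. }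
      assert (G1b : Rabs (Derive g r) <= C' / y ^ 2).
      { apply (md_y (fun x y => Derive (fun t => h t y) x) C' r y); auto. }
      assert (X : (Rabs (g (- r)) + Rabs (g r)) / Rabs k + (Rabs (Derive g (- r)) + Rabs (Derive g r)) / Rabs (k * k)
                  + 2 * (INR N + 1) * (C' / y ^ 2) / Rabs (k * k) <= 2 * C / Rabs k / r + B0).
      { unfold B0. unfold Rdiv in *.
        assert (0 < / Rabs k) by (apply Rinv_0_lt_compat; lra).
        assert (0 < / Rabs (k * k)) by (apply Rinv_0_lt_compat; lra).
        assert (0 < / y ^ 2) by (apply Rinv_0_lt_compat; lra).
        assert (0 < / r) by (apply Rinv_0_lt_compat; lra).
        nra. }
      split; lra. }
    unfold B0 in Hfin. unfold Rdiv in *. lra.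
Qed.


Theorem lemma10 (f : R -> R -> R) (Hs : smooth2 f) (Hn : normal f) :
  (forall k1, k1 <> 0 ->
     (forall y, exists L, fourier_lim (fun x => f x y) k1 L) /\
     (exists D, 0 < D /\ forall y L, Rabs y > 1 ->
        fourier_lim (fun x => f x y) k1 L -> Cmod L <= D / y ^ 2)) /\
  (forall k2, k2 <> 0 ->
     (forall x, exists L, fourier_lim (fun y => f x y) k2 L) /\
     (exists D, 0 < D /\ forall x L, Rabs x > 1 ->
        fourier_lim (fun y => f x y) k2 L -> Cmod L <= D / x ^ 2)).
Proof.
  destruct Hs as [S [Sf HS]].
  destruct Hn as [_ [_ [[C [HC HVC]] [[Cx [HCx HMx]] [[Cy [HCy HMy]] [N [HNx HNy]]]]]]].
  destruct (HS f Sf) as [_ [_ [_ [Sfx Sfy]]]].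
  destruct (HS _ Sfx) as [_ [Dfx [_ [Sfxx _]]]].
  destruct (HS _ Sfy) as [_ [_ [Dfy [_ Sfyy]]]].
  destruct (HS _ Sfxx) as [Cfxx _].
  destruct (HS _ Sfyy) as [Cfyy _].
  destruct (HS f Sf) as [_ [Df0x [Df0y _]]].
  split.
  - apply core.
    + intros y x. apply Df0x.
    + intros y x. apply Dfx.
    + intros y x.
      exact (continuous_comp_2 (fun t : R => t) (fun _ : R => y) (fun a b => Derive (fun t : R => Derive (fun t0 : R => f t0 b) t) a) x (continuous_id x) (continuous_const y x) (Cfxx x y)).
    + exists C; split; auto.
    + exists Cx; split; auto.
    + exists N. intro y. apply HNy.
  - apply (core (fun u v => f v u)).
    + intros y x. apply Df0y.
    + intros y x. apply Dfy.
    + intros y x.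
      exact (continuous_comp_2 (fun _ : R => y) (fun t : R => t) (fun a b => Derive (fun t : R => Derive (fun t0 : R => f a t0) t) b) x (continuous_const y x) (continuous_id x) (Cfyy y x)).
    + exists C; split; auto. intros x y H. rewrite norm2_sym. apply HVC. rewrite norm2_sym; auto.
    + exists Cy; split; auto. intros x y H. rewrite norm2_sym. apply HMy. rewrite norm2_sym; auto.
    + exists N. intro y. apply HNx.
Qed.
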